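(* Let $P$ be a Poisson tensor on $\mathbb{R}^3$, let $H\in C^\infty(\mathbb{R}^3)$, let $S\in C^\infty(\mathbb{R}^3)$ satisfy $PdS=0$, and let $g$ be the symmetric tensor with components $g^{ij}=H^iH^j-\delta^{ij}\sum_k H^kH^k$. If $x$ is a regular point of $P$ (i.e. $P(x)\neq 0$) with $d_xS\neq 0$, then $x$ is an equilibrium point of the system $\dot{x}=PdH+gdS$ if and only if $x$ is an equilibrium of the gradient system $\dot{x}=gdS$.
   Context: $\mathbb{R}^3$ carries the standard Euclidean metric, used to identify tangent and cotangent spaces with $\mathbb{R}^3$; $H^i=H_i=\partial H/\partial x^i$. A Poisson tensor is a skew-symmetric bivector field satisfying the Jacobi identity. *)

(* Defs.v *)
From HB Require Import structures.
From mathcomp Require Import all_boot all_order all_algebra.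
From mathcomp Require Import all_classical all_reals all_analysis.
Set Implicit Arguments. Unset Strict Implicit. Unset Printing Implicit Defensive.
Import Order.TTheory GRing.Theory Num.Theory.
Import numFieldNormedType.Exports.
Local Open Scope ring_scope.

Section Defs.
Variable R : realType.
Notation pt := 'rV[R]_3.

Definition ebasis (i : 'I_3) : pt := delta_mx 0 i.

Definition partial (i : 'I_3) (f : pt -> R) : pt -> R :=
  fun x => 'D_(ebasis i) f x.

Fixpoint iter_partial (l : seq 'I_3) (f : pt -> R) : pt -> R :=
  match l with
  | [::] => f
  | i :: l' => partial i (iter_partial l' f)
  end.

Definition smooth (f : pt -> R) : Prop :=
  forall (l : seq 'I_3) (x : pt), differentiable (iter_partial l f) x.

Definition grad (f : pt -> R) (x : pt) : pt := \row_i partial i f x.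

Definition poisson_tensor (P : pt -> 'M[R]_3) : Prop :=
  (forall i j, smooth (fun x => P x i j)) /\
  (forall x, (P x)^T = - P x) /\
  (forall x i j k,
     \sum_(l < 3) (P x i l * partial l (fun y => P y j k) x
                 + P x j l * partial l (fun y => P y k i) x
                 + P x k l * partial l (fun y => P y i j) x) = 0).

Definition apply_bivector (P : pt -> 'M[R]_3) (f : pt -> R) (x : pt) : pt :=
  \row_i \sum_(j < 3) P x i j * partial j f x.

Definition gtensor (H : pt -> R) (x : pt) : 'M[R]_3 :=
  \matrix_(i, j) (partial i H x * partial j H x
                  - (i == j)%:R * \sum_(k < 3) partial k H x ^+ 2).

Definition apply_g (H S : pt -> R) (x : pt) : pt :=
  \row_i \sum_(j < 3) gtensor H x i j * partial j S x.

End Defs.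

(* Main.v *)
Require Import Defs.
From HB Require Import structures.
From mathcomp Require Import all_boot all_order all_algebra.
From mathcomp Require Import all_classical all_reals all_analysis.
From mathcomp Require Import ring lra.
Import Order.TTheory GRing.Theory Num.Theory.
Local Open Scope ring_scope.

Definition i0 : 'I_3 := @Ordinal 3 0 isT.
Definition i1 : 'I_3 := @Ordinal 3 1 isT.
Definition i2 : 'I_3 := @Ordinal 3 2 isT.

Lemma sum3 (R : nmodType) (F : 'I_3 -> R) : \sum_j F j = F i0 + F i1 + F i2.
Proof.
rewrite !big_ord_recr big_ord0 /= add0r.
by congr (F _ + F _ + F _); apply/val_inj.
Qed.

Lemma ord3P (P : 'I_3 -> Prop) : P i0 -> P i1 -> P i2 -> forall i, P i.
Proof.
move=> p0 p1 p2 [[|[|[|//]]] Hi].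
- by rewrite (_ : Ordinal _ = i0) //; apply/val_inj.
- by rewrite (_ : Ordinal _ = i1) //; apply/val_inj.
- by rewrite (_ : Ordinal _ = i2) //; apply/val_inj.
Qed.

Lemma scalar (R : realFieldType) (a b c h0 h1 h2 s0 s1 s2 : R) :
  a*s1 + b*s2 = 0 -> -a*s0 + c*s2 = 0 -> -b*s0 - c*s1 = 0 ->
  (s0 != 0 \/ s1 != 0 \/ s2 != 0) ->
  let N := h0^+2+h1^+2+h2^+2 in let D := h0*s0+h1*s1+h2*s2 in
  let A0 := a*h1 + b*h2 in let A1 := -a*h0 + c*h2 in let A2 := -b*h0 - c*h1 in
  let G0 := D*h0 - N*s0 in let G1 := D*h1 - N*s1 in let G2 := D*h2 - N*s2 in
  ((A0 + G0 = 0 /\ A1 + G1 = 0 /\ A2 + G2 = 0) <-> (G0 = 0 /\ G1 = 0 /\ G2 = 0)).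
Proof.
move=> Q0 Q1 Q2 hs N D A0 A1 A2 G0 G1 G2; split.
- move=> [e0 [e1 e2]].
  have key : A0^+2 + A1^+2 + A2^+2 = A0*(A0+G0) + A1*(A1+G1) + A2*(A2+G2)
     - N*(h0*(a*s1 + b*s2) + h1*(-a*s0 + c*s2) + h2*(-b*s0 - c*s1)).
    rewrite /G0 /G1 /G2 /A0 /A1 /A2 /N /D; ring.
  rewrite e0 e1 e2 Q0 Q1 Q2 !mulr0 !addr0 in key.
  have u0 : A0 = 0 by apply/eqP; rewrite -sqrf_eq0; apply/eqP; nra.
  have u1 : A1 = 0 by apply/eqP; rewrite -sqrf_eq0; apply/eqP; nra.
  have u2 : A2 = 0 by apply/eqP; rewrite -sqrf_eq0; apply/eqP; nra.
  by move: e0 e1 e2; rewrite u0 u1 u2 !add0r.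
- move=> [g0 [g1 g2]].
  set m01 := h0*s1 - h1*s0; set m02 := h0*s2 - h2*s0; set m12 := h1*s2 - h2*s1.
  have key : m01^+2 + m02^+2 + m12^+2 = - (G0*s0 + G1*s1 + G2*s2).
    rewrite /m01 /m02 /m12 /G0 /G1 /G2 /N /D; ring.
  rewrite g0 g1 g2 !mul0r !addr0 oppr0 in key.
  have z01 : m01 = 0 by apply/eqP; rewrite -sqrf_eq0; apply/eqP; nra.
  have z02 : m02 = 0 by apply/eqP; rewrite -sqrf_eq0; apply/eqP; nra.
  have z12 : m12 = 0 by apply/eqP; rewrite -sqrf_eq0; apply/eqP; nra.
  have gen : forall sk hk, sk * A0 = hk*(a*s1+b*s2) + a*(sk*h1 - hk*s1) + b*(sk*h2-hk*s2) /\
       sk * A1 = hk*(-a*s0+c*s2) - a*(sk*h0 - hk*s0) + c*(sk*h2-hk*s2) /\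
       sk * A2 = hk*(-b*s0-c*s1) - b*(sk*h0 - hk*s0) - c*(sk*h1-hk*s1).
    by move=> sk hk; rewrite /A0 /A1 /A2; split; [|split]; ring.
  have fin : forall sk hk, sk != 0 -> sk*h0 - hk*s0 = 0 -> sk*h1 - hk*s1 = 0 ->
      sk*h2 - hk*s2 = 0 -> A0 = 0 /\ A1 = 0 /\ A2 = 0.
    move=> sk hk nz y0 y1 y2; have [k0 [k1 k2]] := gen sk hk.
    rewrite Q0 Q1 Q2 y0 y1 y2 !mulr0 !addr0 !subr0 in k0 k1 k2.
    by split; [|split]; apply: (mulfI nz); rewrite mulr0.
  have [z0 [z1 z2]] : A0 = 0 /\ A1 = 0 /\ A2 = 0.
    case: hs => [nz|[nz|nz]].
    + apply: (fin s0 h0 nz); rewrite /m01 /m02 in z01 z02; lra.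
    + apply: (fin s1 h1 nz); rewrite /m01 /m12 in z01 z12; lra.
    + apply: (fin s2 h2 nz); rewrite /m02 /m12 in z02 z12; lra.
  by rewrite z0 z1 z2 g0 g1 g2 !addr0.
Qed.

Lemma iff6 (R : pzRingType) (X0 X1 X2 Y0 Y1 Y2 X0' X1' X2' Y0' Y1' Y2' : R) :
  X0 = X0' -> X1 = X1' -> X2 = X2' -> Y0 = Y0' -> Y1 = Y1' -> Y2 = Y2' ->
  ((X0 = 0 /\ X1 = 0 /\ X2 = 0) <-> (Y0 = 0 /\ Y1 = 0 /\ Y2 = 0)) ->
  ((X0' = 0 /\ X1' = 0 /\ X2' = 0) <-> (Y0' = 0 /\ Y1' = 0 /\ Y2' = 0)).
Proof. by move=> -> -> -> -> -> ->. Qed.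

Theorem mainTheorem9 (R : realType) (P : 'rV[R]_3 -> 'M[R]_3)
  (H S : 'rV[R]_3 -> R) (x : 'rV[R]_3) :
  poisson_tensor P -> smooth H -> smooth S ->
  (forall y, apply_bivector P S y = 0) ->
  P x != 0 -> grad S x != 0 ->
  (apply_bivector P H x + apply_g H S x = 0 <-> apply_g H S x = 0).
Proof.
move=> [_ [skew _]] _ _ hPS _ gS.
have sk : forall i j, P x j i = - P x i j.
  by move=> i j; have := congr1 (fun A : 'M[R]_3 => A i j) (skew x); rewrite !mxE.
have dg : forall i, P x i i = 0.
  by move=> i; have := sk i i; lra.
have E1 : forall v : 'rV[R]_3, v = 0 <-> (v 0 i0 = 0 /\ v 0 i1 = 0 /\ v 0 i2 = 0).
  move=> v; split; first by move=> ->; rewrite !mxE.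
  move=> [v0 [v1 v2]]; apply/rowP; apply: ord3P; by rewrite mxE.
set a := P x i0 i1; set b := P x i0 i2; set c := P x i1 i2.
set h0 := partial i0 H x; set h1 := partial i1 H x; set h2 := partial i2 H x.
set s0 := partial i0 S x; set s1 := partial i1 S x; set s2 := partial i2 S x.
have [Q0 [Q1 Q2]] := proj1 (E1 _) (hPS x).
rewrite !mxE !sum3 !dg (sk i0 i1) (sk i0 i2) (sk i1 i2) -/a -/b -/c in Q0 Q1 Q2.
rewrite -/s0 -/s1 -/s2 in Q0 Q1 Q2.
have hs : s0 != 0 \/ s1 != 0 \/ s2 != 0.
  case: (eqVneq s0 0) => [z0|]; last by left.
  case: (eqVneq s1 0) => [z1|]; last by right; left.
  case: (eqVneq s2 0) => [z2|]; last by right; right.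
  move: gS; rewrite (proj2 (E1 (grad S x))) ?eqxx //.
  by rewrite !mxE -/s0 -/s1 -/s2 z0 z1 z2.
have q0 : a*s1 + b*s2 = 0 by rewrite -Q0; ring.
have q1 : -a*s0 + c*s2 = 0 by rewrite -Q1; ring.
have q2 : -b*s0 - c*s1 = 0 by rewrite -Q2; ring.
have := @scalar _ a b c h0 h1 h2 s0 s1 s2 q0 q1 q2 hs.
rewrite !E1 !mxE !sum3 !mxE !dg (sk i0 i1) (sk i0 i2) (sk i1 i2) -/a -/b -/c.
rewrite -/s0 -/s1 -/s2 -/h0 -/h1 -/h2 /=.
rewrite (@sum3 _ (fun k => partial k H x ^+ 2)) -/h0 -/h1 -/h2.
by apply: iff6; ring.
Qed.
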